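(* For every $\kappa\ge 2$, for the $\kappa$-state GM+I model on binary 4-taxon trees (the three trees $T_{ab|cd}$, $T_{ac|bd}$, $T_{ad|bc}$ on taxa $a,b,c,d$), the tree parameter is generically identifiable.
   Context: For a binary $n$-taxon tree $T$ (leaves labeled by the taxa, internal vertices of valence 3) with edge set $E$, the $\kappa$-state GM+I model has parameters $\mathbf s=(\delta,\pi_I,\pi_{GM},(M_e)_{e\in E})$: $\delta\in[0,1]$, probability vectors $\pi_I,\pi_{GM}\in[0,1]^\kappa$ ($\pi_{GM}$ the distribution at a chosen root $r$), and $\kappa\times\kappa$ Markov matrices $M_e$ for edges directed away from $r$. These form a stochastic parameter space $S_T\subseteq\mathbb R^N$, $N=2\kappa-1+|E|\kappa(\kappa-1)$. The joint leaf distribution $P=\phi_T(\mathbf s)$ has entries $p_{i_1\dots i_n}=\delta\,\epsilon(i_1,\dots,i_n)\pi_I(i_1)+(1-\delta)\sum_{(j_v)}\pi_{GM}(j_r)\prod_{e=(u\to w)}M_e(j_u,j_w)$, with $\epsilon=1$ if all indices equal and $0$ otherwise, the sum over all state assignments to vertices extending the leaf states. The tree parameter is generically identifiable for a collection of trees if for each tree $T$ there is a proper algebraic variety $X_T\subsetneq\mathbb C^N$ such that whenever $P\in\bigcup_T\phi_T(S_T\setminus X_T)$, there is a unique tree $T$ with $P\in\phi_T(S_T\setminus X_T)$. *)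

(* Defs.v *)
From HB Require Import structures.
From mathcomp Require Import all_boot all_order all_algebra.
From mathcomp Require Import reals.
From mathcomp Require Import complex.
From mathcomp Require mpoly.

Set Implicit Arguments.
Unset Strict Implicit.
Unset Printing Implicit Defensive.

Import Order.TTheory GRing.Theory Num.Theory.
Local Open Scope ring_scope.

(* Taxa a,b,c,d are 0,1,2,3 : 'I_4.
   The three trees are indexed by t : 'I_3 :
     t = 0 : T_{ab|cd},  t = 1 : T_{ac|bd},  t = 2 : T_{ad|bc}.
   Each tree has internal vertices u, v; the cherry {x,y} hangs at u,
   the cherry {z,w} at v.  The root r is u and the five edges, directed
   away from the root, are labelled by 'I_5:
     e0 : u -> x,  e1 : u -> y,  e2 : v -> z,  e3 : v -> w,  e4 : u -> v. *)

Definition taxon (n : nat) : 'I_4 := inord n.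

(* (x, y, z, w) for the tree t : the split is xy | zw *)
Definition tree_leaves (t : 'I_3) : 'I_4 * 'I_4 * 'I_4 * 'I_4 :=
  match val t with
  | 0 => (taxon 0, taxon 1, taxon 2, taxon 3)
  | 1 => (taxon 0, taxon 2, taxon 1, taxon 3)
  | _ => (taxon 0, taxon 3, taxon 1, taxon 2)
  end.

Definition edge (n : nat) : 'I_5 := inord n.

Record gmi_param (R : realType) (kappa : nat) := GMIParam {
  gmi_delta : R;
  gmi_piI   : 'I_kappa -> R;
  gmi_piGM  : 'I_kappa -> R;          (* distribution at the root u *)
  gmi_M     : 'I_5 -> 'I_kappa -> 'I_kappa -> R
}.

Definition prob_vector (R : realType) (kappa : nat) (p : 'I_kappa -> R) : Prop :=
  (forall i, 0 <= p i) /\ \sum_(i < kappa) p i = 1.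

Definition stochastic (R : realType) (kappa : nat) (s : gmi_param R kappa) : Prop :=
  0 <= gmi_delta s <= 1 /\
  prob_vector (gmi_piI s) /\ prob_vector (gmi_piGM s) /\
  (forall e i, prob_vector (gmi_M s e i)).

(* Free coordinates (the ambient space R^N, N = 2 kappa - 1 + 5 kappa (kappa-1)).
   Coordinates: delta; pi_I(j), pi_GM(j) for j < kappa - 1;
   M_e(i, j) for all e, all i, and j < kappa - 1.  The remaining entries
   (the last state of each probability vector / row) are determined by
   the sum-to-one constraints. *)
Definition coord_index (kappa : nat) : finType :=
  (unit + ('I_kappa.-1 + ('I_kappa.-1 + ('I_5 * 'I_kappa * 'I_kappa.-1))))%type.

Definition free_state (kappa : nat) (j : 'I_kappa.-1) : 'I_kappa :=
  widen_ord (leq_pred kappa) j.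

Definition coords (R : realType) (kappa : nat) (s : gmi_param R kappa)
  (c : coord_index kappa) : R :=
  match c with
  | inl _ => gmi_delta s
  | inr (inl j) => gmi_piI s (free_state j)
  | inr (inr (inl j)) => gmi_piGM s (free_state j)
  | inr (inr (inr (e, i, j))) => gmi_M s e i (free_state j)
  end.

Definition Ndim (kappa : nat) : nat := #|coord_index kappa|.

Definition complex_point (R : realType) (kappa : nat) (s : gmi_param R kappa)
  : 'I_(Ndim kappa) -> R[i] :=
  fun n => (coords s (enum_val n))%:C%C.

Definition zero_set (R : realType) (n : nat) (F : mpoly.mpoly n R[i] -> Prop)
  : ('I_n -> R[i]) -> Prop :=
  fun x => forall p, F p -> mpoly.meval x p = 0.

Definition proper_variety (R : realType) (n : nat) (X : ('I_n -> R[i]) -> Prop)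
  : Prop :=
  (exists F : mpoly.mpoly n R[i] -> Prop, forall x, X x <-> zero_set F x) /\
  (exists x, ~ X x).

Definition gmi_dist (R : realType) (kappa : nat) (t : 'I_3)
  (s : gmi_param R kappa) : {ffun {ffun 'I_4 -> 'I_kappa} -> R} :=
  let: (x, y, z, w) := tree_leaves t in
  [ffun ii : {ffun 'I_4 -> 'I_kappa} =>
     gmi_delta s * (if [forall l, ii l == ii (taxon 0)] then 1 else 0)
       * gmi_piI s (ii (taxon 0))
     + (1 - gmi_delta s) *
       \sum_(ju < kappa) \sum_(jv < kappa)
         (gmi_piGM s ju * gmi_M s (edge 0) ju (ii x) * gmi_M s (edge 1) ju (ii y)
          * gmi_M s (edge 4) ju jv
          * gmi_M s (edge 2) jv (ii z) * gmi_M s (edge 3) jv (ii w))].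

Definition in_image_off (R : realType) (kappa : nat) (t : 'I_3)
  (X : ('I_(Ndim kappa) -> R[i]) -> Prop)
  (P : {ffun {ffun 'I_4 -> 'I_kappa} -> R}) : Prop :=
  exists s : gmi_param R kappa,
    stochastic s /\ ~ X (complex_point s) /\ gmi_dist t s = P.

Definition tree_generically_identifiable (R : realType) (kappa : nat) : Prop :=
  exists X : 'I_3 -> ('I_(Ndim kappa) -> R[i]) -> Prop,
    (forall t, proper_variety (X t)) /\
    forall P : {ffun {ffun 'I_4 -> 'I_kappa} -> R},
      (exists t, in_image_off t (X t) P) ->
      exists! t, in_image_off t (X t) P.

(* Main.v *)
Require Import Defs.
From HB Require Import structures.
From mathcomp Require Import all_boot all_order all_algebra.
From mathcomp Require Import reals complex.
From mathcomp Require Import mpoly.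
Set Implicit Arguments.
Unset Strict Implicit.
Unset Printing Implicit Defensive.
Import Order.TTheory GRing.Theory Num.Theory.
Local Open Scope ring_scope.

Lemma taxon_eq (i j : nat) : (i < 4)%N -> (j < 4)%N -> (taxon i == taxon j) = (i == j).
Proof. by move=> hi hj; rewrite -val_eqE /= /taxon !inordK. Qed.

Definition lx (t : 'I_3) := (tree_leaves t).1.1.1.
Definition ly (t : 'I_3) := (tree_leaves t).1.1.2.
Definition lz (t : 'I_3) := (tree_leaves t).1.2.
Definition lw (t : 'I_3) := (tree_leaves t).2.

Lemma leaves_ok s : [&& lx s != ly s, lx s != lz s, lx s != lw s, ly s != lz s,
  ly s != lw s & lz s != lw s].
Proof.
by case: s => [[|[|[|//]]] Hs]; rewrite /lx /ly /lz /lw /= !taxon_eq.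
Qed.

Section Generic.
Variable k : nat.

Definition gdist (K : pzRingType) (t : 'I_3) (dl : K) (pI pG : 'I_k -> K)
  (M : 'I_5 -> 'I_k -> 'I_k -> K) (ii : {ffun 'I_4 -> 'I_k}) : K :=
  dl * (if [forall l, ii l == ii (taxon 0)] then 1 else 0) * pI (ii (taxon 0))
  + (1 - dl) * \sum_(ju < k) \sum_(jv < k)
     (pG ju * M (edge 0) ju (ii (lx t)) * M (edge 1) ju (ii (ly t))
      * M (edge 4) ju jv * M (edge 2) jv (ii (lz t)) * M (edge 3) jv (ii (lw t))).

Lemma gmi_distE (R : realType) t (s : gmi_param R k) ii :
  gmi_dist t s ii = gdist t (gmi_delta s) (gmi_piI s) (gmi_piGM s) (gmi_M s) ii.
Proof.
rewrite /gmi_dist /gdist /lx /ly /lz /lw.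
by case: (tree_leaves t) => [[[x y] z] w] /=; rewrite ffunE.
Qed.

Lemma gdist_map (K K' : pzRingType) (f : {rmorphism K -> K'}) t dl pI pG M ii :
  f (gdist t dl pI pG M ii) =
  gdist t (f dl) (f \o pI) (f \o pG) (fun e i j => f (M e i j)) ii.
Proof.
rewrite /gdist rmorphD !rmorphM rmorphB rmorph1 (fun_if f) rmorph1 rmorph0 rmorph_sum.
congr (_ + _ * _); apply: eq_bigr => ju _; rewrite rmorph_sum.
by apply: eq_bigr => jv _; rewrite !rmorphM.
Qed.

Definition idx (s : 'I_3) (p q : 'I_k * 'I_k) : {ffun 'I_4 -> 'I_k} :=
  [ffun l => if l == lx s then p.1 else if l == ly s then p.2
             else if l == lz s then q.1 else q.2].

Lemma idxE s p q : [/\ idx s p q (lx s) = p.1, idx s p q (ly s) = p.2,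
  idx s p q (lz s) = q.1 & idx s p q (lw s) = q.2].
Proof.
case/and5P: (leaves_ok s) => h1 h2 h3 h4 /andP [h5 h6]; rewrite /idx !ffunE eqxx.
by rewrite eq_sym (negbTE h1) eqxx eq_sym (negbTE h2) eq_sym (negbTE h4) eqxx
  eq_sym (negbTE h3) eq_sym (negbTE h5) eq_sym (negbTE h6).
Qed.

Definition minorP (K : pzRingType) (s : 'I_3) (rf cf : 'I_k.+1 -> 'I_k * 'I_k)
  (P : {ffun 'I_4 -> 'I_k} -> K) : K :=
  \det (\matrix_(r < k.+1, c < k.+1) P (idx s (rf r) (cf c))).

Definition adm (rf cf : 'I_k.+1 -> 'I_k * 'I_k) :=
  forall r c, (rf r).1 = (rf r).2 -> (cf c).1 = (cf c).2 -> (rf r).1 <> (cf c).1.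

Lemma minor_map (K K' : comPzRingType) (f : {rmorphism K -> K'}) s rf cf P :
  f (minorP s rf cf P) = minorP s rf cf (f \o P).
Proof.
rewrite /minorP -det_map_mx; congr (\det _); apply/matrixP => r c; by rewrite !mxE.
Qed.

Lemma det_lowrank (F : fieldType) (A : 'M[F]_(k.+1, k)) (B : 'M[F]_(k, k.+1)) :
  \det (A *m B) = 0.
Proof.
apply/eqP; apply: contraT => H.
have : row_free (A *m B) by rewrite row_free_unit unitmxE unitfE.
rewrite /row_free => /eqP E.
have := leq_trans (mxrankM_maxl A B) (rank_leq_col A).
by rewrite E ltnn.
Qed.

Lemma minor_vanish (F : fieldType) s rf cf dl pI pG (M : 'I_5 -> 'I_k -> 'I_k -> F) :
  adm rf cf -> minorP s rf cf (gdist s dl pI pG M) = 0.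
Proof.
move=> hadm.
pose A := \matrix_(r < k.+1, jv < k) \sum_(ju < k) (pG ju * M (edge 0) ju (rf r).1
   * M (edge 1) ju (rf r).2 * M (edge 4) ju jv).
pose B := \matrix_(jv < k, c < k.+1) (M (edge 2) jv (cf c).1 * M (edge 3) jv (cf c).2).
rewrite /minorP.
suff -> : (\matrix_(r < k.+1, c < k.+1) gdist s dl pI pG M (idx s (rf r) (cf c)))
   = (1 - dl) *: (A *m B) by rewrite detZ det_lowrank mulr0.
apply/matrixP => r c; rewrite !mxE /gdist.
case: (idxE s (rf r) (cf c)) => -> -> -> ->.
case: ifP => [/forallP H|_]; last first.
  rewrite mulr0 mul0r add0r; congr (_ * _).
  rewrite exchange_big; apply: eq_bigr => jv _; rewrite !mxE mulr_suml.
  by apply: eq_bigr => ju _; rewrite !mulrA.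
exfalso.
have h1 := H (lx s); have h2 := H (ly s); have h3 := H (lz s); have h4 := H (lw s).
case: (idxE s (rf r) (cf c)) h1 h2 h3 h4 => -> -> -> -> /eqP h1 /eqP h2 /eqP h3 /eqP h4.
apply: (hadm r c); [by rewrite h1 h2 | by rewrite h3 h4 | by rewrite h1 h3].
Qed.

Lemma gdist_ext (K : pzRingType) t (dl dl' : K) pI pI' pG pG' M M' ii :
  dl = dl' -> pI =1 pI' -> pG =1 pG' -> (forall e i j, M e i j = M' e i j) ->
  gdist t dl pI pG M ii = gdist t dl' pI' pG' M' ii.
Proof.
move=> -> h1 h2 h3; rewrite /gdist h1; congr (_ + _ * _).
by apply: eq_bigr => ju _; apply: eq_bigr => jv _; rewrite h2 !h3.
Qed.

Lemma minorP_ext (K : pzRingType) s rf cf (P P' : {ffun 'I_4 -> 'I_k} -> K) :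
  P =1 P' -> minorP s rf cf P = minorP s rf cf P'.
Proof. by move=> h; rewrite /minorP; congr (\det _); apply/matrixP => r c; rewrite !mxE. Qed.

Lemma minor_vanish_gmi (R : realType) s rf cf (p : gmi_param R k) :
  adm rf cf -> minorP s rf cf (gmi_dist s p) = 0.
Proof.
move=> h; rewrite (minorP_ext _ _ _ (gmi_distE s p)); exact: minor_vanish.
Qed.

End Generic.

Lemma edge_eq (i j : nat) : (i < 5)%N -> (j < 5)%N -> (edge i == edge j) = (i == j).
Proof. by move=> hi hj; rewrite -val_eqE /= /edge !inordK. Qed.

Lemma tl0 (t : 'I_3) : val t = 0%N -> tree_leaves t = (taxon 0, taxon 1, taxon 2, taxon 3).
Proof. by rewrite /tree_leaves => ->. Qed.
Lemma tl1 (t : 'I_3) : val t = 1%N -> tree_leaves t = (taxon 0, taxon 2, taxon 1, taxon 3).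
Proof. by rewrite /tree_leaves => ->. Qed.
Lemma tl2 (t : 'I_3) : val t = 2%N -> tree_leaves t = (taxon 0, taxon 3, taxon 1, taxon 2).
Proof. by rewrite /tree_leaves => ->. Qed.

Section Witness.
Variable R : realType.
Variable k' : nat.
Local Notation n := k'.+2.

Definition wM (e : 'I_5) (j i : 'I_n) : R :=
  if e == edge 4 then n%:R^-1
  else if (e == edge 1) || (e == edge 3) then (i == j + 1)%:R else (i == j)%:R.

Definition witness : gmi_param R n :=
  GMIParam 0 (fun i : 'I_n => (i == 0)%:R) (fun _ => n%:R^-1) wM.

Definition cond (t : 'I_3) (ii : {ffun 'I_4 -> 'I_n}) :=
  (ii (ly t) == ii (lx t) + 1) && (ii (lw t) == ii (lz t) + 1).

Lemma n_neq0 : (n%:R : R) != 0.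
Proof. by rewrite pnatr_eq0. Qed.

Lemma sum_single (F : 'I_n -> R) x : (forall j, j != x -> F j = 0) -> \sum_j F j = F x.
Proof. by move=> h; rewrite (bigD1 x) //= big1 ?addr0. Qed.

Lemma witness_dist t ii :
  gmi_dist t witness ii = n%:R^-1 * n%:R^-1 * (cond t ii)%:R.
Proof.
rewrite gmi_distE /gdist /= !mul0r add0r subr0 mul1r.
rewrite (@sum_single _ (ii (lx t))); last first.
  move=> ju; rewrite eq_sym => /negbTE hju; apply: big1 => jv _.
  by rewrite /wM !edge_eq //= hju !(mulr0, mul0r).
rewrite (@sum_single _ (ii (lz t))); last first.
  move=> jv; rewrite eq_sym => /negbTE hjv.
  by rewrite /wM !edge_eq //= hjv !(mulr0, mul0r).
rewrite /wM !edge_eq //= !eqxx /cond.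
by case: (_ == _); case: (_ == _); rewrite /= !(mulr1, mulr0, mul0r).
Qed.

Definition rowf (r : 'I_n.+1) : 'I_n * 'I_n :=
  match unlift ord0 r with Some i => (i, i + 1) | None => (0, 0) end.

Lemma add1_neq (x : 'I_n) : (x + 1 == x) = false.
Proof. by apply/negbTE; rewrite -{2}[x]addr0 (inj_eq (addrI x)) oner_neq0. Qed.

Lemma rowf_inj : injective rowf.
Proof.
move=> r c; rewrite /rowf.
case: unliftP => [i ->|->]; case: unliftP => [j ->|->] //.
- by move/eqP; rewrite xpair_eqE => /andP [/eqP -> _].
- by move/eqP; rewrite xpair_eqE => /andP [/eqP h1 /eqP h2]; move: (add1_neq i); rewrite h2 h1 eqxx.
- by move/eqP; rewrite xpair_eqE => /andP [/eqP h1 /eqP h2]; move: (add1_neq j); rewrite -h2 -h1 eqxx.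
Qed.

Lemma wit_minor t s (g : 'I_n * 'I_n -> 'I_n * 'I_n) :
  (forall p q, cond t (idx s p q) = (q == g p)) -> injective g ->
  minorP s rowf (g \o rowf) (gmi_dist t witness) != 0.
Proof.
move=> hc hg; rewrite /minorP.
have -> : (\matrix_(r < n.+1, c < n.+1) gmi_dist t witness (idx s (rowf r) ((g \o rowf) c)))
   = (n%:R^-1 * n%:R^-1) *: 1%:M.
  apply/matrixP => r c; rewrite !mxE witness_dist hc /= (inj_eq hg) (inj_eq rowf_inj).
  by rewrite eq_sym; case: (r == c); rewrite ?mulr1 ?mulr0.
rewrite detZ det1 mulr1 expf_neq0 // mulf_neq0 // invr_eq0 n_neq0 //.
Qed.

End Witness.

Section Cases.
Variable R : realType.
Variable k' : nat.
Local Notation n := k'.+2.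
Implicit Types p q : 'I_n * 'I_n.
Local Notation rowf := (@rowf k').

Definition gA p : 'I_n * 'I_n := (p.1 + 1, p.2 + 1).
Definition gB p : 'I_n * 'I_n := (p.1 + 1, p.2 - 1).
Definition gC p : 'I_n * 'I_n := (p.2 - 1, p.1 + 1).
Definition gD p : 'I_n * 'I_n := (p.2 + 1, p.1 + 1).

Ltac solve_inj := move=> [a b] [c d] /= /eqP; rewrite !xpair_eqE =>
  /andP [/eqP h1 /eqP h2]; congr pair;
  by [apply: (addIr 1) | apply: (addIr (-1))].

Lemma gA_inj : injective gA. Proof. solve_inj. Qed.
Lemma gB_inj : injective gB. Proof. solve_inj. Qed.
Lemma gC_inj : injective gC. Proof. solve_inj. Qed.
Lemma gD_inj : injective gD. Proof. solve_inj. Qed.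

Lemma adm_g (g : 'I_n * 'I_n -> 'I_n * 'I_n) : (g (0, 0)).1 != 0 ->
  (forall j : 'I_n, (g (j, j + 1)).1 != (g (j, j + 1)).2) -> adm rowf (g \o rowf).
Proof.
move=> h0 hj r c /=; rewrite /rowf.
case: unliftP => [i _|_]; case: unliftP => [j _|_] /=.
- by move=> /eqP; rewrite eq_sym add1_neq.
- by move=> /eqP; rewrite eq_sym add1_neq.
- by move=> _ /eqP; rewrite (negbTE (hj j)).
- by move=> _ _ h; move: h0; rewrite -h eqxx.
Qed.

Lemma sub1_neq (x : 'I_n) : (x - 1 == x) = false.
Proof. by apply/negbTE; rewrite -{2}[x]addr0 (inj_eq (addrI x)) oppr_eq0 oner_neq0. Qed.

Lemma admA : adm rowf (gA \o rowf).
Proof. apply: adm_g => [|j]; first by []. by rewrite /gA /= eq_sym add1_neq. Qed.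
Lemma admB : adm rowf (gB \o rowf).
Proof. apply: adm_g => [|j]; first by []. by rewrite /gB /= addrK add1_neq. Qed.
Lemma admC : adm rowf (gC \o rowf).
Proof. apply: adm_g => [|j]; first by rewrite /gC /= sub0r oppr_eq0 oner_neq0. by rewrite /gC /= addrK eq_sym add1_neq. Qed.
Lemma admD : adm rowf (gD \o rowf).
Proof. apply: adm_g => [|j]; first by []. by rewrite /gD /= add1_neq. Qed.

Ltac solve_cond ht hs tlt tls := move=> [p1 p2] [q1 q2];
  rewrite /cond /idx !ffunE /lx /ly /lz /lw (tlt _ ht) (tls _ hs) /= !taxon_eq //=
    xpair_eqE.

Lemma cond01 t s : val t = 0%N -> val s = 1%N ->
  forall p q, cond t (idx s p q) = (q == gA p).
Proof. move=> ht hs; solve_cond ht hs tl0 tl1. Qed.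
Lemma cond02 t s : val t = 0%N -> val s = 2%N ->
  forall p q, cond t (idx s p q) = (q == gB p).
Proof. move=> ht hs; solve_cond ht hs tl0 tl2; rewrite /= ?[_ == _ - 1]eq_sym ?subr_eq //; try by rewrite andbC. Qed.
Lemma cond10 t s : val t = 1%N -> val s = 0%N ->
  forall p q, cond t (idx s p q) = (q == gA p).
Proof. move=> ht hs; solve_cond ht hs tl1 tl0; rewrite /= ?[_ == _ - 1]eq_sym ?subr_eq //; try by rewrite andbC. Qed.
Lemma cond12 t s : val t = 1%N -> val s = 2%N ->
  forall p q, cond t (idx s p q) = (q == gC p).
Proof. move=> ht hs; solve_cond ht hs tl1 tl2; rewrite /= ?[_ == _ - 1]eq_sym ?subr_eq //; try by rewrite andbC. Qed.
Lemma cond20 t s : val t = 2%N -> val s = 0%N ->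
  forall p q, cond t (idx s p q) = (q == gD p).
Proof. move=> ht hs; solve_cond ht hs tl2 tl0; rewrite /= ?[_ == _ - 1]eq_sym ?subr_eq //; try by rewrite andbC. Qed.
Lemma cond21 t s : val t = 2%N -> val s = 1%N ->
  forall p q, cond t (idx s p q) = (q == gC p).
Proof. move=> ht hs; solve_cond ht hs tl2 tl1; rewrite /= ?[_ == _ - 1]eq_sym ?subr_eq //; try by rewrite andbC. Qed.
End Cases.

Definition o1 (t : 'I_3) : 'I_3 := inord (if val t == 0%N then 1 else 0).
Definition o2 (t : 'I_3) : 'I_3 := inord (if val t == 2%N then 1 else 2).

Lemma other (t t2 : 'I_3) : t != t2 -> t2 = o1 t \/ t2 = o2 t.
Proof.
case: t => [[|[|[|//]]] Ht]; case: t2 => [[|[|[|//]]] Ht2] //= _;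
  rewrite /o1 /o2 /=;
  by [left; apply: val_inj; rewrite /= inordK | right; apply: val_inj; rewrite /= inordK].
Qed.

Section Poly.
Variable R : realType.
Variable k' : nat.
Local Notation n := k'.+2.
Local Notation Kp := {mpoly R[i][Ndim n]}.

Definition Xc (c : coord_index n) : Kp := 'X_(enum_rank c).

Definition vecP (f : 'I_k'.+1 -> Kp) (j : 'I_n) : Kp :=
  match unlift ord_max j with Some j' => f j' | None => 1 - \sum_j' f j' end.

Definition dlP : Kp := Xc (inl tt).
Definition pIP := vecP (fun j => Xc (inr (inl j))).
Definition pGP := vecP (fun j => Xc (inr (inr (inl j)))).
Definition MP (e : 'I_5) (i : 'I_n) := vecP (fun j => Xc (inr (inr (inr (e, i, j))))).
Definition Pp t (ii : {ffun 'I_4 -> 'I_n}) : Kp := gdist t dlP pIP pGP MP ii.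

Definition sums1 (s : gmi_param R n) :=
  \sum_i gmi_piI s i = 1 /\ \sum_i gmi_piGM s i = 1 /\
  forall e i, \sum_j gmi_M s e i j = 1.

Lemma stoch_sums1 s : stochastic s -> sums1 s.
Proof.
case=> _ [[_ h1] [[_ h2] h3]]; split => //; split => // e i; by case: (h3 e i).
Qed.

Lemma meval_Xc s c : meval (complex_point s) (Xc c) = (coords s c)%:C%C.
Proof. by rewrite /Xc mevalXU /complex_point enum_rankK. Qed.

Lemma vec_recon (v : 'I_n -> R) (Hv : \sum_i v i = 1) (f : 'I_k'.+1 -> Kp) x
  (hf : forall j, meval x (f j) = (v (@free_state n j))%:C%C) j :
  meval x (vecP f j) = (v j)%:C%C.
Proof.
rewrite /vecP; case: unliftP => [j' ->|->].
  by rewrite hf; congr (v _)%:C%C; apply: val_inj; rewrite /= /bump leqNgt ltn_ord.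
have E : forall m : 'I_n, val m = k'.+1 -> v m = 1 - \sum_(j < k'.+1) v (@free_state n j).
  move=> m hm; rewrite -Hv big_ord_recr /= addrC.
  have -> : m = ord_max by apply: val_inj.
  have -> : \sum_(j0 < k'.+1) v (@free_state n j0) =
            \sum_(i < k'.+1) v (widen_ord (leqnSn k'.+1) i).
    by apply: eq_bigr => j0 _; congr (v _); apply: val_inj.
  by rewrite addrK.
rewrite E //.
rewrite !rmorphB !rmorph1 !rmorph_sum.
by congr (_ - _); apply: eq_bigr => j0 _; exact: hf.
Qed.

Lemma Pp_eval t s (hs : sums1 s) ii :
  meval (complex_point s) (Pp t ii) = (gmi_dist t s ii)%:C%C.
Proof.
case: hs => h1 [h2 h3].
rewrite /Pp (gdist_map (meval (complex_point s))) gmi_distE (gdist_map (real_complex R)).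
apply: gdist_ext => [|j|j|e i j] /=.
- by rewrite /dlP meval_Xc.
- by apply: vec_recon => // j'; rewrite meval_Xc.
- by apply: vec_recon => // j'; rewrite meval_Xc.
- by apply: vec_recon => // j'; rewrite meval_Xc.
Qed.

Lemma minor_eval t s (hs : sums1 s) s' rf cf :
  meval (complex_point s) (minorP s' rf cf (Pp t)) = (minorP s' rf cf (gmi_dist t s))%:C%C.
Proof.
rewrite (minor_map (meval (complex_point s))) (minor_map (real_complex R)).
by apply: minorP_ext => ii /=; exact: Pp_eval.
Qed.

End Poly.

Section Main.
Variable R : realType.
Variable k' : nat.
Local Notation n := k'.+2.
Local Notation Kp := {mpoly R[i][Ndim n]}.

Lemma sum_ind (a : 'I_n) : \sum_i ((i == a)%:R : R) = 1.
Proof. by rewrite (@sum_single R k' _ a) ?eqxx // => j /negbTE ->. Qed.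

Lemma sum_inv : \sum_(i < n) (n%:R^-1 : R) = 1.
Proof. by rewrite sumr_const card_ord -[_ *+ _]mulr_natr mulVf // n_neq0. Qed.

Lemma witness_sums1 : sums1 (witness R k').
Proof.
split; first exact: sum_ind.
split; first exact: sum_inv.
move=> e i /=; rewrite /wM; case: (e == edge 4); first exact: sum_inv.
by case: (_ || _); exact: sum_ind.
Qed.

Definition Fam (t : 'I_3) (p : Kp) := exists rf1 cf1 rf2 cf2 : 'I_n.+1 -> 'I_n * 'I_n,
  adm rf1 cf1 /\ adm rf2 cf2 /\
  p = minorP (o1 t) rf1 cf1 (@Pp R k' t) * minorP (o2 t) rf2 cf2 (@Pp R k' t).

Lemma fam_proper t (g1 g2 : 'I_n * 'I_n -> 'I_n * 'I_n) :
  (forall p q, cond t (idx (o1 t) p q) = (q == g1 p)) ->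
  (forall p q, cond t (idx (o2 t) p q) = (q == g2 p)) ->
  injective g1 -> injective g2 ->
  adm (@rowf k') (g1 \o (@rowf k')) -> adm (@rowf k') (g2 \o (@rowf k')) ->
  exists x, ~ zero_set (Fam t) x.
Proof.
move=> c1 c2 i1 i2 a1 a2; exists (complex_point (witness R k')) => H.
have hF : Fam t (minorP (o1 t) (@rowf k') (g1 \o (@rowf k')) (@Pp R k' t) *
                 minorP (o2 t) (@rowf k') (g2 \o (@rowf k')) (@Pp R k' t)).
  by exists (@rowf k'), (g1 \o (@rowf k')), (@rowf k'), (g2 \o (@rowf k')).
have := H _ hF.
have E : meval (complex_point (witness R k'))
   (minorP (o1 t) (@rowf k') (g1 \o (@rowf k')) (@Pp R k' t) *
    minorP (o2 t) (@rowf k') (g2 \o (@rowf k')) (@Pp R k' t)) =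
   (minorP (o1 t) (@rowf k') (g1 \o (@rowf k')) (gmi_dist t (witness R k')) *
    minorP (o2 t) (@rowf k') (g2 \o (@rowf k')) (gmi_dist t (witness R k')))%:C%C.
  have e1 := minor_eval t witness_sums1 (o1 t) (@rowf k') (g1 \o (@rowf k')).
  have e2 := minor_eval t witness_sums1 (o2 t) (@rowf k') (g2 \o (@rowf k')).
  rewrite mevalM rmorphM; congr (_ * _); [exact: e1 | exact: e2].
rewrite E => h; have := congr1 (fun z : R[i] => complex.Re z) h; move=> /= h'.
have w1 := @wit_minor R k' t (o1 t) g1 c1 i1; have w2 := @wit_minor R k' t (o2 t) g2 c2 i2.
move/eqP: h'; rewrite mulf_eq0 => /orP [h1|h2].
  by rewrite h1 in w1.
by rewrite h2 in w2.
Qed.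

End Main.

Theorem proposition11 (R : realType) (kappa : nat) :
  (2 <= kappa)%N -> tree_generically_identifiable R kappa.
Proof.
case: kappa => [|[|k']] // _.
exists (fun t => zero_set (@Fam R k' t)); split.
  move=> t; split; first by exists (@Fam R k' t).
  case: t => [[|[|[|//]]] Ht].
  - apply: (@fam_proper R k' _ (@gA k') (@gB k')).
    + by apply: cond01 => //; rewrite /o1 /= inordK.
    + by apply: cond02 => //; rewrite /o2 /= inordK.
    + exact: gA_inj.
    + exact: gB_inj.
    + exact: admA.
    + exact: admB.
  - apply: (@fam_proper R k' _ (@gA k') (@gC k')).
    + by apply: cond10 => //; rewrite /o1 /= inordK.
    + by apply: cond12 => //; rewrite /o2 /= inordK.
    + exact: gA_inj.
    + exact: gC_inj.
    + exact: admA.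
    + exact: admC.
  - apply: (@fam_proper R k' _ (@gD k') (@gC k')).
    + by apply: cond20 => //; rewrite /o1 /= inordK.
    + by apply: cond21 => //; rewrite /o2 /= inordK.
    + exact: gD_inj.
    + exact: gC_inj.
    + exact: admD.
    + exact: admC.
move=> P [t Ht]; exists t; split => // t2 Ht2.
apply/eqP; apply: contraT => neq; exfalso.
case: Ht => s [hs [hX hP]]; case: Ht2 => s2 [hs2 [_ hP2]].
apply: hX => p [rf1 [cf1 [rf2 [cf2 [a1 [a2 ->]]]]]].
have hs1 := stoch_sums1 hs.
have e1 := minor_eval t hs1 (o1 t) rf1 cf1.
have e2 := minor_eval t hs1 (o2 t) rf2 cf2.
have E : meval (complex_point s)
   (minorP (o1 t) rf1 cf1 (@Pp R k' t) * minorP (o2 t) rf2 cf2 (@Pp R k' t)) =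
   (minorP (o1 t) rf1 cf1 (gmi_dist t2 s2) * minorP (o2 t) rf2 cf2 (gmi_dist t2 s2))%:C%C.
  rewrite mevalM rmorphM hP2 -hP; congr (_ * _); [exact: e1 | exact: e2].
rewrite E.
case: (other neq) => ht2.
- have z := @minor_vanish_gmi k'.+2 R (o1 t) rf1 cf1 s2 a1.
  by rewrite ht2 z mul0r rmorph0.
- have z := @minor_vanish_gmi k'.+2 R (o2 t) rf2 cf2 s2 a2.
  by rewrite ht2 z mulr0 rmorph0.
Qed.
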